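(* Fix a total number $N_{\text{total}} > 0$ of collected data samples, split into $E_N = N_{\text{total}}/E_L$ episodes each of fixed length $E_L \in \{1,2,\dots\}$. Let $P_s(l)$ be the probability that the state at interaction step $l$ of an episode is secure, where $P_s$ does not depend on $E_L$, and define the expected number of secure state visits over all episodes as \[ N_s(E_L) = \frac{N_{\text{total}}}{E_L}\sum_{l=1}^{E_L} P_s(l). \] Then $N_s$ remains constant or increases when $E_L$ is reduced; that is, $N_s(E_L+1) \le N_s(E_L)$ for every $E_L \ge 1$.
   Context: A dead-end state is a state from which, once reached at some step of a trajectory, no policy can lead to the goal state at any later step; a secure state is a state that is not a dead-end state. The dead-end set is absorbing along trajectories (once in a dead-end state, all subsequent states are dead-end states), so that $P_s(l) = \prod_{k=1}^{l}(1-P_d(k))$ with $P_d(k) \in [0,1]$ the probability of falling into a dead-end state at step $k$; in particular $P_s$ is a non-increasing function of the interaction step $l$. *)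

(* Defs.v *)
From mathcomp Require Import all_boot all_order all_algebra.
Set Implicit Arguments. Unset Strict Implicit. Unset Printing Implicit Defensive.
Import Order.TTheory GRing.Theory Num.Theory.
Local Open Scope ring_scope.

(* Probability that the state at interaction step l is secure:
   P_s(l) = prod_{k=1}^{l} (1 - P_d(k)), where P_d(k) is the probability of
   falling into a dead-end state at step k. *)
Definition Psecure (R : realFieldType) (Pd : nat -> R) (l : nat) : R :=
  \prod_(1 <= k < l.+1) (1 - Pd k).

Definition Nsecure (R : realFieldType) (Ntotal : R) (Pd : nat -> R) (EL : nat) : R :=
  Ntotal / EL%:R * \sum_(1 <= l < EL.+1) Psecure Pd l.

(* Main.v *)
Require Import Defs.
From mathcomp Require Import all_boot all_order all_algebra.
From mathcomp Require Import ring lra.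
Import Order.TTheory GRing.Theory Num.Theory.
Local Open Scope ring_scope.

Lemma Ps_succ (R : realFieldType) (Pd : nat -> R) l :
  Psecure Pd l.+1 = Psecure Pd l * (1 - Pd l.+1).
Proof. by rewrite /Psecure big_nat_recr. Qed.

Lemma Ps_ge0 (R : realFieldType) (Pd : nat -> R) (hPd : forall k, 0 <= Pd k <= 1) l :
  0 <= Psecure Pd l.
Proof.
elim: l => [|l IH]; first by rewrite /Psecure big_geq.
rewrite Ps_succ; apply: mulr_ge0 => //.
by have /andP[_ h] := hPd l.+1; rewrite subr_ge0.
Qed.

Lemma Ps_dec (R : realFieldType) (Pd : nat -> R) (hPd : forall k, 0 <= Pd k <= 1) l :
  Psecure Pd l.+1 <= Psecure Pd l.
Proof.
rewrite Ps_succ; have := @Ps_ge0 R Pd hPd l; have /andP[h1 h2] := hPd l.+1.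
move=> h0; rewrite -[X in _ <= X]mulr1; apply: ler_wpM2l => //; lra.
Qed.

Lemma Ps_mono (R : realFieldType) (Pd : nat -> R) (hPd : forall k, 0 <= Pd k <= 1) l n :
  (l <= n)%N -> Psecure Pd n <= Psecure Pd l.
Proof.
elim: n => [|n IH]; first by rewrite leqn0 => /eqP ->.
rewrite leq_eqVlt => /orP[/eqP -> //|]; rewrite ltnS => /IH.
by apply: le_trans; apply: (@Ps_dec R Pd hPd).
Qed.

Theorem theorem1 (R : realFieldType) (Ntotal : R) (Pd : nat -> R)
  (hN : 0 < Ntotal) (hPd : forall k, 0 <= Pd k <= 1) (EL : nat) (hEL : (1 <= EL)%N) :
  Nsecure Ntotal Pd EL.+1 <= Nsecure Ntotal Pd EL.
Proof.
rewrite /Nsecure big_nat_recr //=.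
set S := \sum_(1 <= l < EL.+1) Psecure Pd l.
set p := Psecure Pd EL.+1.
have hS : EL%:R * p <= S.
  have -> : EL%:R * p = \sum_(1 <= l < EL.+1) p.
    by rewrite sumr_const_nat subn1 /= mulr_natl.
  rewrite /S big_nat_cond [X in _ <= X]big_nat_cond.
  apply: ler_sum => l /andP[/andP[_ hl] _]; apply: (@Ps_mono R Pd hPd) => //.
  by apply: ltnW.
have ha : 0 < EL%:R :> R by rewrite ltr0n.
rewrite -natr1.
set a := EL%:R in hS ha *.
rewrite -subr_ge0.
have -> : Ntotal / a * S - Ntotal / (a + 1) * (S + p) =
  Ntotal * (S - a * p) / (a * (a + 1)).
  by field; apply/andP; split; rewrite gt_eqF //; lra.
apply: divr_ge0; last by apply: mulr_ge0; lra.
by apply: mulr_ge0; lra.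
Qed.
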